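(* Let $q$ be a prime power, $j\ge2$ an integer, $h_{\boldsymbol a}(X)=X^j+a_{j-1}X^{j-1}+\cdots+a_1X+a_0\in\mathbb{F}_q[X]$, and let $L_j=L_j(h_{\boldsymbol a})$ be its companion matrix. Then $\mathrm{rank}(L_j-L_j^T)\ge j-2$. Moreover, if $j$ is odd then $\mathrm{rank}(L_j-L_j^T)=j-1$; if $j$ is even then $\mathrm{rank}(L_j-L_j^T)=j$ if and only if $1+a_0+a_2+a_4+\cdots+a_{j-2}\neq0$.
   Context: The companion matrix $L_j(h_{\boldsymbol a})$ is the $j\times j$ matrix over $\mathbb{F}_q$ whose $i$-th row, for $1\le i\le j-1$, has a $1$ in column $i+1$ and zeros elsewhere, and whose last row is $(-a_0,-a_1,\dots,-a_{j-1})$. *)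

(* Defs.v *)
From mathcomp Require Import all_boot all_order all_algebra.
Set Implicit Arguments. Unset Strict Implicit. Unset Printing Implicit Defensive.
Import GRing.Theory.
Local Open Scope ring_scope.

(* Companion matrix L_j(h_a) of h_a(X) = X^j + a_{j-1} X^{j-1} + ... + a_0,
   with coefficients a : 'I_j -> R (a k = a_k).  0-indexed: row i < j-1 has
   a 1 in column i+1, last row is (-a_0, ..., -a_{j-1}). *)
Definition companion (R : nzRingType) (j : nat) (a : 'I_j -> R) : 'M[R]_j :=
  \matrix_(i < j, k < j)
    if (i.+1 < j)%N then ((k : nat) == i.+1)%:R else - a k.

(* Main.v *)
Require Import Defs.
From mathcomp Require Import all_boot all_order all_algebra.
From mathcomp Require Import zify ring.
Set Implicit Arguments. Unset Strict Implicit. Unset Printing Implicit Defensive.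
Import GRing.Theory.
Local Open Scope ring_scope.

Section Rk.
Variable F : fieldType.

Lemma mul_sel m d (u : 'rV[F]_m) (s : 'I_d -> 'I_m) c :
  (u *m \matrix_(i, c) (i == s c)%:R) 0 c = u 0 (s c).
Proof.
rewrite mxE (bigD1 (s c)) //= mxE eqxx mulr1 big1 ?addr0 // => i /negbTE ne.
by rewrite mxE ne mulr0.
Qed.

Lemma kerbound m d (M : 'M[F]_m) (s : 'I_d -> 'I_m) :
  (forall u : 'rV_m, u *m M = 0 -> (forall c, u 0 (s c) = 0) -> u = 0) ->
  (m - d <= \rank M)%N.
Proof.
move=> H.
set P := \matrix_(i, c) (i == s c)%:R : 'M[F]_(m, d).
have := mxrank_mul_ker (kermx M) P.
set B := (kermx M :&: kermx P)%MS.
have B0 : B = 0.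
  have BM : B *m M = 0 by apply/sub_kermxP; exact: capmxSl.
  have BP : B *m P = 0 by apply/sub_kermxP; exact: capmxSr.
  apply/matrixP => r c; rewrite mxE.
  have -> : B r c = row r B 0 c by rewrite mxE.
  have -> : row r B = 0; last by rewrite mxE.
  apply: H; first by rewrite -row_mul BM row0.
  by move=> c'; rewrite -mul_sel -row_mul BP row0 mxE.
rewrite B0 mxrank0 addn0 mxrank_ker => E.
have := rank_leq_col (kermx M *m P); rewrite E.
have := rank_leq_row M. lia.
Qed.

Lemma kervec m (M : 'M[F]_m) (u : 'rV_m) :
  u != 0 -> u *m M = 0 -> (\rank M < m)%N.
Proof.
move=> u0 uM.
have : (u <= kermx M)%MS by apply/sub_kermxP.
move/mxrankS; rewrite rank_rV u0 mxrank_ker.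
have := rank_leq_row M. lia.
Qed.
End Rk.

Lemma sum_ind (F : nzRingType) (p : nat) (g : nat -> F) y :
  \sum_(i < p) g i * ((i : nat) == y)%:R = if (y < p)%N then g y else 0.
Proof.
elim: p => [|p IH]; first by rewrite big_ord0.
rewrite big_ord_recr /= IH.
case: (ltngtP y p) => [yp|py|->].
- have -> : (y < p.+1)%N by lia.
  by rewrite mulr0 addr0.
- have -> : (y < p.+1)%N = false by lia.
  by rewrite mulr0 addr0.
- by rewrite ltnSn mulr1 add0r.
Qed.

Section Comp.
Variable F : fieldType.
Variable n : nat.
Variable a : 'I_n.+2 -> F.

Definition fv (v : 'rV[F]_n.+2) x := if (x < n.+2)%N then v 0 (inord x) else 0.
Definition A x := if (x < n.+2)%N then a (inord x) else 0.

Lemma fvE (v : 'rV[F]_n.+2) (i : 'I_n.+2) : v 0 i = fv v i.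
Proof. by rewrite /fv ltn_ord inord_val. Qed.
Lemma AE (i : 'I_n.+2) : a i = A i.
Proof. by rewrite /A ltn_ord inord_val. Qed.

Lemma Keq (v : 'rV[F]_n.+2) (k : 'I_n.+2) :
 (v *m (companion a - (companion a)^T)) 0 k =
 if (k < n.+1)%N then (if (k:nat) is k'.+1 then fv v k' else 0) - fv v k.+1 - fv v n.+1 * A k
 else fv v n + \sum_(i < n.+1) fv v i * A i.
Proof.
rewrite mulmxBr !mxE /=.
under eq_bigr => i _ do rewrite !mxE fvE.
under [X in _ - X]eq_bigr => i _ do rewrite !mxE fvE.
rewrite big_ord_recr /= ltnn -AE.
under eq_bigr => i _ do rewrite ltnS ltn_ord.
case: k => k Hk /=.
have hk2 : (k.+1 < n.+2)%N = (k < n.+1)%N by [].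
rewrite hk2; case: (ltnP k n.+1) => hk.
- rewrite sum_ind hk2 hk /= AE /=.
  case: k Hk hk hk2 => [|k] Hk hk hk2.
    rewrite big1 ?add0r; last by move=> i _; rewrite mulr0.
    rewrite /=; ring.
  under eq_bigr => i _ do rewrite eqSS eq_sym.
  rewrite sum_ind (ltnW hk) /=; ring.
- have ek : k = n.+1 by lia.
  subst k.
  under eq_bigr => i _ do rewrite eqSS eq_sym.
  rewrite sum_ind ltnSn big_ord_recr /= !AE /=.
  under [X in _ - (X + _)]eq_bigr => i _ do rewrite AE /= mulrN.
  rewrite sumrN /=. ring.
Qed.




Local Notation M := (companion a - (companion a)^T).

Lemma rec_eq (x y z : F) : x - y - z = 0 -> y = x - z.
Proof. move=> h; have -> : y = y + (x - y - z) by rewrite h addr0. ring. Qed.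

Lemma Krow (v : 'rV[F]_n.+2) : v *m M = 0 -> forall k, (k < n.+1)%N ->
  fv v k.+1 = (if k is k'.+1 then fv v k' else 0) - fv v n.+1 * A k.
Proof.
move=> H k hk; apply: rec_eq.
have := H; move/rowP/(_ (inord k)).
by rewrite /= Keq inordK ?hk ?mxE //; lia.
Qed.

Lemma Klast (v : 'rV[F]_n.+2) : v *m M = 0 ->
  fv v n + \sum_(i < n.+1) fv v i * A i = 0.
Proof.
move=> H; have := H; move/rowP/(_ ord_max).
by rewrite /= Keq ltnn mxE.
Qed.

Lemma fv_out (v : 'rV[F]_n.+2) x : (n.+2 <= x)%N -> fv v x = 0.
Proof. by move=> h; rewrite /fv ltnNge h. Qed.

Lemma vzero (v : 'rV[F]_n.+2) : (forall x, (x < n.+2)%N -> fv v x = 0) -> v = 0.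
Proof. by move=> H; apply/rowP => i; rewrite mxE fvE H. Qed.

Lemma parity (v : 'rV[F]_n.+2) : v *m M = 0 -> fv v n.+1 = 0 ->
  forall x, (x < n.+2)%N -> fv v x = if odd x then 0 else fv v 0.
Proof.
move=> H t0.
suff S : forall x, (x.+1 < n.+2)%N ->
  fv v x = (if odd x then 0 else fv v 0) /\ fv v x.+1 = (if odd x.+1 then 0 else fv v 0).
  case=> [|x] hx //; by case: (S x hx).
elim=> [|x IH] hx.
  by rewrite /= (Krow H) // t0 mul0r subr0.
have [_ ->] := IH (ltnW hx); split => //.
rewrite (Krow H) ?t0 ?mul0r ?subr0; last by lia.
by have [-> _] := IH (ltnW hx); rewrite /= negbK.
Qed.

Lemma U (v : 'rV[F]_n.+2) : v *m M = 0 -> fv v 0 = 0 -> fv v n.+1 = 0 -> v = 0.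
Proof.
move=> H f0 t0; apply: vzero => x hx; rewrite (parity H t0 hx) f0; by case: odd.
Qed.

Lemma tele (f : nat -> F) p :
  \sum_(i < p.+1) f i * ((if (i : nat) is i'.+1 then f i' else 0) - f i.+1) = - (f p * f p.+1).
Proof.
elim: p => [|p IH]; first by rewrite big_ord1 /=; ring.
rewrite big_ord_recr /= IH; ring.
Qed.

Definition G i := if odd i then 0 else A i.

Lemma Sconv : \sum_(i < n.+2 | ~~ odd i && (i <= n.+2 - 2)%N) a i = \sum_(i < n.+1) G i.
Proof.
rewrite big_mkcond big_ord_recr /=.
have -> : (n.+1 <= n.+2 - 2)%N = false by lia.
rewrite andbF addr0; apply: eq_bigr => i _.
have -> : (i <= n.+2 - 2)%N by have := ltn_ord i; lia.
by rewrite andbT AE /G /=; case: odd.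
Qed.


Lemma lowb : (n <= \rank M)%N.
Proof.
have := @kerbound F n.+2 2 M (fun c => if c == ord0 then ord0 else ord_max).
rewrite subSS subSS subn0; apply => u uM h.
apply: (U uM).
  by have := h ord0; rewrite /= fvE.
by have := h ord_max; rewrite /= fvE.
Qed.

Fixpoint hs (k : nat) : F :=
  match k with 0 => 0 | k1.+1 => match k1 with 0 => - A 0 | k2.+1 => hs k2 - A k1 end end.

Definition cc := 1 - hs n.+1.
Definition wf x := hs x + (if odd x then 0 else cc).

Lemma wrow k : A k = (if k is k'.+1 then wf k' else 0) - wf k.+1.
Proof.
rewrite /wf; case: k => [|k] /=; first ring.
rewrite negbK; ring.
Qed.

Lemma odd_case : odd n -> \rank M = n.+1.
Proof.
move=> on.
apply/eqP; rewrite eqn_leq; apply/andP; split; last first.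
  have := @kerbound F n.+2 1 M (fun _ => ord_max).
  rewrite subn1 /=; apply => u uM h.
  have t0 : fv u n.+1 = 0 by have := h ord0; rewrite fvE.
  apply: (U uM) => //.
  by rewrite -t0 (parity uM t0 (ltnSn _)) /= on.
set w := \row_(i < n.+2) wf i.
have fw x : (x < n.+2)%N -> fv w x = wf x by move=> hx; rewrite /fv hx mxE inordK.
have w1 : wf n.+1 = 1 by rewrite /wf /= on /= /cc addrC subrK.
have : (\rank M < n.+2)%N; last by [].
apply: (@kervec F n.+2 M w).
  apply/eqP => w0; have := fw n.+1 (ltnSn _).
  by rewrite w0 w1 /fv ltnSn mxE => /eqP; rewrite eq_sym oner_eq0.
apply/rowP => k; rewrite Keq mxE; case: ifP => hk.
  rewrite (wrow k) (fw k.+1) // (fw n.+1) // w1.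
  case: k hk => [[|k] Hk] hk /=; first ring.
  rewrite fw; [ring | lia].
have ek : (k : nat) = n.+1 by have := ltn_ord k; lia.
rewrite fw //.
have fw2 : forall i : 'I_n.+1, fv w i = wf i by move=> i; apply: fw; have := ltn_ord i; lia.
under eq_bigr => i _ do rewrite fw2 (wrow i).
rewrite tele w1; ring.
Qed.

Lemma even_case : ~~ odd n -> (\rank M = n.+2 <-> 1 + \sum_(i < n.+1) G i != 0).
Proof.
move=> en; split.
  move=> rk; apply/negP => /eqP S0.
  set w := \row_(i < n.+2) (if odd i then 0 else 1 : F).
  have fw x : (x < n.+2)%N -> fv w x = (if odd x then 0 else 1)
    by move=> hx; rewrite /fv hx mxE inordK.
  have : (\rank M < n.+2)%N; last by rewrite rk ltnn.
  apply: (@kervec F n.+2 M w).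
    apply/eqP => w0; have := fw 0%N isT.
    by rewrite w0 /fv mxE => /eqP; rewrite eq_sym oner_eq0.
  apply/rowP => k; rewrite Keq mxE; case: ifP => hk.
    rewrite (fw k.+1) // (fw n.+1) // /= en /= mul0r subr0.
    case: k hk => [[|k] Hk] hk /=; first by rewrite subrr.
    rewrite fw /= ?negbK ?subrr //; lia.
  rewrite fw // (negbTE en) -[RHS]S0.
  congr (_ + _); apply: eq_bigr => i _; rewrite fw /G; last by have := ltn_ord i; lia.
  by case: odd; rewrite ?mul0r ?mul1r.
move=> S1; apply/eqP; rewrite eqn_leq rank_leq_row /=.
have := @kerbound F n.+2 0 M (fun _ => ord0); rewrite subn0; apply => u uM _.
set t := fv u n.+1.
have oddf : forall m, (m.*2.+1 < n.+2)%N -> fv u m.*2.+1 = - (t * \sum_(i < m.*2.+1) G i).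
  elim=> [|m IH] hm.
    by rewrite (Krow uM) // big_ord1 /G /= -/t; ring.
  rewrite doubleS (Krow uM); last by lia.
  rewrite IH; last by lia.
  rewrite !big_ord_recr /= /G /= odd_double /=; rewrite -/t; ring.
have t0 : t = 0.
  have := oddf n./2; rewrite even_halfK // => /(_ (ltnSn _)).
  rewrite -/t => /eqP; rewrite -subr_eq0 opprK -[X in X + _]mulr1 -mulrDr mulf_eq0.
  by rewrite (negbTE S1) orbF => /eqP.
have par := parity uM t0.
apply: (U uM) => //.
have := Klast uM.
rewrite par // (negbTE en).
under eq_bigr => i _ do rewrite par ?(ltn_trans (ltn_ord i)) //.
have -> : \sum_(i < n.+1) (if odd i then 0 else fv u 0) * A i = fv u 0 * \sum_(i < n.+1) G i.
  rewrite mulr_sumr; apply: eq_bigr => i _; rewrite /G; case: odd; ring.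
rewrite -[X in X + _]mulr1 -mulrDr => /eqP; rewrite mulf_eq0 (negbTE S1) orbF.
by move/eqP.
Qed.

End Comp.



Theorem lemma2p7 (F : finFieldType) (j : nat) (a : 'I_j -> F) :
  (2 <= j)%N ->
  let L := companion a in
  [/\ (j - 2 <= \rank (L - L^T)%R)%N,
      odd j -> \rank (L - L^T)%R = j.-1
    & ~~ odd j ->
      (\rank (L - L^T)%R = j <->
       1 + \sum_(i < j | ~~ odd i && (i <= j - 2)%N) a i != 0)].
Proof.
case: j a => [|[|n]] a // _ L.
have e2 : (n.+2 - 2 = n)%N by lia.
split.
- by rewrite e2; exact: lowb.
- by rewrite /= negbK => on; exact: odd_case.
- by rewrite /= negbK Sconv => en; exact: even_case.
Qed.
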